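(* Let a General Utility Markov Game (see context) satisfy (A1) for every $i$ and every $\pi_{-i}\in\Pi_{-i}$, $(\lambda_1,\dots,\lambda_N)\mapsto F_i(\lambda_1,\dots,\lambda_N,\pi_{-i})$ is jointly concave, and (A2) $d_\mu^\pi(s)>0$ for all $\pi\in\Pi$, $s\in\mathcal S$. Let $v(\pi)=(\nabla_{\pi_i}u_{\mu,i}(\pi))_{i\in\mathcal N}$. Then $\pi^\star\in\Pi$ is a Nash equilibrium if and only if $\pi^\star=\mathrm{Proj}_\Pi(\pi^\star+\eta\,v(\pi^\star))$ for all $\eta>0$, equivalently if and only if $\pi_i^\star=\mathrm{Proj}_{\Pi_i}(\pi_i^\star+\eta\,\nabla_{\pi_i}u_{\mu,i}(\pi^\star))$ for all $i\in\mathcal N$ and all $\eta>0$, where $\mathrm{Proj}$ denotes Euclidean projection.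
   Context: A GUMG consists of: agents $\mathcal N=\{1,\dots,N\}$; finite state space $\mathcal S$; finite action sets $\mathcal A_i$, joint $\mathcal A=\prod_i\mathcal A_i$; transition kernel $P:\mathcal S\times\mathcal A\to\Delta(\mathcal S)$; initial distribution $\mu$; discount $\gamma\in(0,1)$; differentiable $F_i:\Lambda\times\Pi_{-i}\to\mathbb R$, $\Lambda=\prod_i\Delta(\mathcal S\times\mathcal A_i)$. Policies $\Pi_i=\Delta(\mathcal A_i)^{\mathcal S}$ as vectors $(\pi_i(a_i|s))$ in Euclidean space; $\Pi=\prod_i\Pi_i$; $\pi(a|s)=\prod_i\pi_i(a_i|s)$. With $\mathbb P_{\mu,\pi}$ the law of the induced chain ($s_0\sim\mu$): $d_\mu^\pi(s)=(1-\gamma)\sum_t\gamma^t\mathbb P_{\mu,\pi}(s_t=s)$, $\lambda_{\mu,i}^\pi(s,a_i)=(1-\gamma)\sum_t\gamma^t\mathbb P_{\mu,\pi}(s_t=s,a_{i,t}=a_i)$. Utilities $u_{\mu,i}(\pi)=F_i(\lambda_{\mu,1}^\pi,\dots,\lambda_{\mu,N}^\pi,\pi_{-i})$; $\nabla_{\pi_i}$ is the gradient w.r.t. coordinates $\pi_i(a_i|s)$. $\pi^\star$ is a Nash equilibrium if $u_{\mu,i}(\pi_i',\pi^\star_{-i})\le u_{\mu,i}(\pi^\star)$ for all $i$ and $\pi_i'\in\Pi_i$. *)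

(* Defs.v *)
From HB Require Import structures.
From mathcomp Require Import all_boot all_order all_algebra.
From mathcomp Require Import all_classical all_reals all_analysis.
From Stdlib Require Import ClassicalEpsilon.
Set Implicit Arguments. Unset Strict Implicit. Unset Printing Implicit Defensive.
Import Order.TTheory GRing.Theory Num.Theory.
Local Open Scope ring_scope.

Section Generic.
Variable R : realType.
Variable I : finType.

Definition sqdist (x y : I -> R) : R := \sum_(k : I) (x k - y k) ^+ 2.

Definition Proj (C : (I -> R) -> Prop) (x : I -> R) : I -> R :=
  epsilon (inhabits (fun _ : I => 0 : R))
    (fun y => C y /\ forall z, C z -> sqdist x y <= sqdist x z).

Definition pderiv (f : (I -> R) -> R) (x : I -> R) (k : I) : R :=
  derive1 (fun t : R => f (fun k' => if k' == k then x k' + t else x k')) 0.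

Definition diffble (f : (I -> R) -> R) (x : I -> R) : Prop :=
  exists g : I -> R, forall e : R, 0 < e -> exists d : R, 0 < d /\
    forall h : I -> R, (forall k, `|h k| <= d) ->
      `|f (fun k => x k + h k) - f x - \sum_(k : I) g k * h k|
        <= e * \sum_(k : I) `|h k|.
End Generic.

Definition tsum (R : realType) (f : nat -> R) : R :=
  limn (fun n => \sum_(0 <= t < n) f t).

Section Index.
Variables (N : nat) (S : finType) (A : 'I_N -> finType).

Definition jact := {dffun forall i : 'I_N, A i}.
(* coordinates (i, s, a_i) of a policy profile pi (entries pi_i(a_i|s)),
   and equally of an occupancy-measure profile lambda (entries lambda_i(s,a_i)) *)
Definition pcoord := {i : 'I_N & (S * A i)%type}.
Definition mkc (i : 'I_N) (x : (S * A i)%type) : pcoord :=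
  Tagged (fun j => (S * A j)%type) x.
Definition pcoord_mi (i : 'I_N) := {k : pcoord | tag k != i}.
End Index.

Section GUMG.
Variable R : realType.
Variables (N : nat) (S : finType) (A : 'I_N -> finType).
Variable P : S -> jact A -> S -> R.      (* P(s'|s,a) = P s a s' *)
Variable mu : S -> R.
Variable gamma : R.

Local Unset Implicit Arguments.
Definition restr (pi : pcoord S A -> R) (i : 'I_N) : (S * A i)%type -> R :=
  fun x => pi (mkc x).
Definition pminus (i : 'I_N) (pi : pcoord S A -> R) : pcoord_mi S A i -> R :=
  fun k => pi (val k).

Definition inPi_i (i : 'I_N) (p : (S * A i)%type -> R) : Prop :=
  forall s : S, (forall a : A i, 0 <= p (s, a)) /\ \sum_(a : A i) p (s, a) = 1.
Definition inPi (pi : pcoord S A -> R) : Prop := forall i, inPi_i i (restr pi i).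

Definition inLam (l : pcoord S A -> R) : Prop :=
  forall i : 'I_N, (forall x : (S * A i)%type, 0 <= l (mkc x)) /\
                   \sum_(x : (S * A i)%type) l (mkc x) = 1.

Definition jpol (pi : pcoord S A -> R) (s : S) (a : jact A) : R :=
  \prod_(i : 'I_N) pi (mkc (s, a i)).
Definition cstep (pi : pcoord S A -> R) (p : S -> R) : S -> R :=
  fun s' => \sum_(s : S) p s * \sum_(a : jact A) jpol pi s a * P s a s'.
Definition stlaw (pi : pcoord S A -> R) (t : nat) : S -> R := iter t (cstep pi) mu.

Definition dmu (pi : pcoord S A -> R) (s : S) : R :=
  (1 - gamma) * tsum (fun t => gamma ^+ t * stlaw pi t s).
(* lambda_{mu,i}^pi(s,a_i) at coordinate k = (i,s,a_i);
   P_{mu,pi}(s_t = s, a_{i,t} = a_i) = P_{mu,pi}(s_t = s) * pi_i(a_i|s) *)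
Definition lam (pi : pcoord S A -> R) (k : pcoord S A) : R :=
  (1 - gamma) * tsum (fun t => gamma ^+ t * (stlaw pi t (tagged k).1 * pi k)).

Variable F : forall i : 'I_N, (pcoord S A -> R) -> (pcoord_mi S A i -> R) -> R.

Definition util (i : 'I_N) (pi : pcoord S A -> R) : R := F i (lam pi) (pminus i pi).

Definition grad_i (i : 'I_N) (pi : pcoord S A -> R) : (S * A i)%type -> R :=
  fun x => pderiv (util i) pi (mkc x).
Definition vfield (pi : pcoord S A -> R) : pcoord S A -> R :=
  fun k => pderiv (util (tag k)) pi k.

(* Nash equilibrium; (pi_i', pi*_{-i}) ranges over the profiles in Pi
   agreeing with pi* off agent i *)
Definition Nash (pistar : pcoord S A -> R) : Prop :=
  inPi pistar /\
  forall (i : 'I_N) (pi' : pcoord S A -> R), inPi pi' ->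
    (forall k : pcoord S A, tag k != i -> pi' k = pistar k) ->
    util i pi' <= util i pistar.

Definition Fjoint (i : 'I_N) (z : (pcoord S A + pcoord_mi S A i)%type -> R) : R :=
  F i (fun k => z (inl k)) (fun k => z (inr k)).
Definition joinv (i : 'I_N) (l : pcoord S A -> R) (q : pcoord_mi S A i -> R)
  : (pcoord S A + pcoord_mi S A i)%type -> R :=
  fun z => match z with inl k => l k | inr k => q k end.
End GUMG.
Arguments restr {R N S A} pi i _.
Arguments pminus {R N S A} i pi _.
Arguments inPi_i {R N S A} i p.
Arguments inPi {R N S A} pi.
Arguments inLam {R N S A} l.
Arguments jpol {R N S A} pi s a.
Arguments cstep {R N S A} P pi p _.
Arguments stlaw {R N S A} P mu pi t _.
Arguments dmu {R N S A} P mu gamma pi s.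
Arguments lam {R N S A} P mu gamma pi k.
Arguments util {R N S A} P mu gamma F i pi.
Arguments grad_i {R N S A} P mu gamma F i pi _.
Arguments vfield {R N S A} P mu gamma F pi _.
Arguments Nash {R N S A} P mu gamma F pistar.
Arguments Fjoint {R N S A} F i z.
Arguments joinv {R N S A} i l q _.

(* Main.v *)
Require Import Defs.
From HB Require Import structures.
From mathcomp Require Import all_boot all_order all_algebra.
From mathcomp Require Import all_classical all_reals all_analysis.
From Stdlib Require Import ClassicalEpsilon.
From mathcomp Require Import ring lra.
Import Order.TTheory GRing.Theory Num.Theory numFieldNormedType.Exports.
Local Open Scope ring_scope.
Set Implicit Arguments. Unset Strict Implicit. Unset Printing Implicit Defensive.

Section ProjSec.
Variable R : realType.
Variable I : finType.
Implicit Types x y z : I -> R.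

Definition VI (C : (I -> R) -> Prop) x y :=
  forall z, C z -> \sum_k (x k - y k) * (z k - y k) <= 0.

Definition convexs (C : (I -> R) -> Prop) :=
  forall y z (t : R), C y -> C z -> 0 <= t <= 1 -> C (fun k => y k + t * (z k - y k)).

Lemma sqdist_expand x y z : sqdist x z =
  sqdist x y - 2 * (\sum_k (x k - y k) * (z k - y k)) + sqdist y z.
Proof.
rewrite /sqdist mulr_sumr -sumrB -big_split /=.
by apply: eq_bigr => k _; rewrite !expr2; ring.
Qed.

Lemma sqdist_ge0 x y : 0 <= sqdist x y.
Proof. by apply: sumr_ge0 => k _; rewrite sqr_ge0. Qed.

Lemma VI_min C x y : VI C x y -> forall z, C z -> sqdist x y <= sqdist x z.
Proof.
move=> H z Cz; rewrite (sqdist_expand x y z).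
have := H z Cz; have := sqdist_ge0 y z; lra.
Qed.

Lemma min_VI C x y : convexs C -> C y ->
  (forall z, C z -> sqdist x y <= sqdist x z) -> VI C x y.
Proof.
move=> cC Cy Hm z Cz.
set S := \sum_k _.
set Q := sqdist y z.
have HQ : 0 <= Q by exact: sqdist_ge0.
have key : forall t : R, 0 < t <= 1 -> 2 * S <= t * Q.
  move=> t /andP[t0 t1].
  have := Hm _ (cC y z t Cy Cz (andb_true_intro (conj (ltW t0) t1))).
  rewrite (sqdist_expand x y (fun k => y k + t * (z k - y k))).
  have -> : \sum_k (x k - y k) * (y k + t * (z k - y k) - y k) = t * S.
    by rewrite /S mulr_sumr; apply: eq_bigr => k _; ring.
  have -> : sqdist y (fun k => y k + t * (z k - y k)) = t ^+ 2 * Q.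
    by rewrite /Q /sqdist mulr_sumr; apply: eq_bigr => k _; rewrite !expr2; ring.
  move=> h.
  have h2 : t * (2 * S) <= t * (t * Q) by rewrite !expr2 in h; nra.
  by rewrite ler_pM2l in h2.
rewrite leNgt; apply/negP => S0.
have SQ : 0 < S + Q by lra.
pose t := S / (S + Q).
have tSQ : t * (S + Q) = S by rewrite /t mulfVK // gt_eqF.
have t0 : 0 < t by rewrite /t divr_gt0.
have t1 : t <= 1 by rewrite /t ler_pdivrMr // mul1r; lra.
have := key t (andb_true_intro (conj t0 t1)).
nra.
Qed.

Lemma VI_unique C x y y' : VI C x y -> VI C x y' -> C y -> C y' -> y = y'.
Proof.
move=> H1 H2 C1 C2.
have h := lerD (H1 y' C2) (H2 y C1).
rewrite -big_split /= in h.
have e : \sum_k (y' k - y k) ^+ 2 = 0.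
  apply/eqP; rewrite eq_le sumr_ge0 ?andbT; last by move=> k _; rewrite sqr_ge0.
  rewrite addr0 in h; apply: le_trans h; rewrite le_eqVlt; apply/orP; left; apply/eqP.
  by apply: eq_bigr => k _; rewrite expr2; ring.
apply: funext => k.
have := @psumr_eq0P _ _ _ _ (fun k _ => sqr_ge0 (y' k - y k)) e k isT.
by move/eqP; rewrite sqrf_eq0 subr_eq0 => /eqP.
Qed.

Lemma proj_char C x y : convexs C -> (exists y0, C y0 /\ VI C x y0) -> C y ->
  (y = Proj C x <-> VI C x y).
Proof.
move=> cC [y0 [C0 V0]] Cy.
have ex : exists p, C p /\ (forall z, C z -> sqdist x p <= sqdist x z).
  by exists y0; split => //; exact: VI_min.
have [Cp Mp] := epsilon_spec (inhabits (fun _ : I => 0 : R))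
   (fun p => C p /\ (forall z, C z -> sqdist x p <= sqdist x z)) ex.
have Vp := min_VI cC Cp Mp.
split.
  by move=> ->; exact: Vp.
by move=> Vy; apply: (VI_unique Vy Vp Cy Cp).
Qed.

End ProjSec.

Section BlockProj.
Variable R : realType.
Variables (K B : finType) (b : K -> B).

Definition Cb (y : K -> R) := (forall k, 0 <= y k) /\ (forall be, \sum_(k | b k == be) y k = 1).

Lemma convex_Cb : convexs Cb.
Proof.
move=> y z t [y0 y1] [z0 z1] /andP[t0 t1]; split.
  move=> k; have := y0 k; have := z0 k.
  have -> : y k + t * (z k - y k) = (1 - t) * y k + t * z k by ring.
  move=> hz hy; apply: addr_ge0; apply: mulr_ge0 => //; lra.
move=> be; rewrite big_split /= -mulr_sumr sumrB y1 z1; ring.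
Qed.

Lemma Cb_exists (x : K -> R) : (forall be, exists k, b k = be) ->
  exists y, Cb y /\ VI Cb x y.
Proof.
move=> ne.
have ht : forall be, exists t : R, \sum_(k | b k == be) Num.max (x k - t) 0 = 1.
  move=> be; have [k0 hk0] := ne be.
  pose M := \sum_k `|x k|.
  have xM : forall k, `|x k| <= M.
    move=> k; rewrite /M (bigD1 k) //= lerDl; apply: sumr_ge0 => *; exact: normr_ge0.
  pose g : R -> R := fun t : R => \sum_(k | b k == be) Num.max (x k - t) 0.
  have gc : continuous g.
    rewrite /g; apply: continuous_big; first exact: add_continuous.
    move=> k _ t.
    have := @continuous_max R R (fun t => x k - t) (fun _ => 0) t; apply.
      by apply: cvgB; [exact: cvg_cst | exact: cvg_id].
    exact: cvg_cst.
  have gb : g M = 0.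
    rewrite /g; apply: big1 => k _; apply/max_idPr.
    have := xM k; have := ler_norm (x k); lra.
  have ga : 1 <= g (- (M + 1)).
    rewrite /g (bigD1 k0) ?hk0 ?eqxx //=.
    have r0 : 0 <= \sum_(i | (b i == be) && (i != k0)) Num.max (x i - - (M + 1)) 0.
      by apply: sumr_ge0 => *; rewrite le_max lexx orbT.
    suff : 1 <= Num.max (x k0 - - (M + 1)) 0 by lra.
    rewrite le_max; apply/orP; left.
    have := xM k0; have := ler_norm (- x k0); rewrite normrN; lra.
  have M0 : 0 <= M by apply: sumr_ge0 => *; exact: normr_ge0.
  have [c _ gc1] := @IVT R g (- (M + 1)) M 1 (ltac:(lra))
     (ltac:(by apply: continuous_subspaceT)) (ltac:(rewrite gb; apply/andP; split;
        [rewrite ge_min; apply/orP; right; lra | rewrite le_max; apply/orP; left; exact: ga])).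
  by exists c.
have [tau htau] := choice _ ht.
pose y := fun k => Num.max (x k - tau (b k)) 0.
have Cy : Cb y.
  split; first by move=> k; rewrite /y le_max lexx orbT.
  move=> be; rewrite -(htau be); apply: eq_bigr => k /eqP <-; done.
exists y; split => // z [z0 z1].
apply: (@le_trans _ _ (\sum_k tau (b k) * (z k - y k))).
  apply: ler_sum => k _; rewrite /y /=.
  case: (leP 0 (x k - tau (b k))) => h.
    have -> : x k - (x k - tau (b k)) = tau (b k) by ring. done.
  rewrite !subr0; have := z0 k; nra.
rewrite (partition_big b xpredT) //=.
rewrite big1 // => be _.
rewrite (eq_bigr (fun k => tau be * (z k - y k))); last by move=> k /eqP ->.
by rewrite -mulr_sumr sumrB z1 (proj2 Cy) subrr mulr0.
Qed.

End BlockProj.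

Section Neumann.
Variable R : realType.
Variable S : finType.
Implicit Types (q : S -> S -> R) (v b : S -> R).

Definition Kop q v : S -> R := fun s' => \sum_s v s * q s s'.
Definition n1 v := \sum_s `|v s|.
Definition rowb q rho := forall s, \sum_s' `|q s s'| <= rho.

Lemma n1_ge0 v : 0 <= n1 v.
Proof. by apply: sumr_ge0 => s _; exact: normr_ge0. Qed.

Lemma le_n1 v s : `|v s| <= n1 v.
Proof.
rewrite /n1 (bigD1 s) //= lerDl; apply: sumr_ge0 => *; exact: normr_ge0.
Qed.

Lemma Kop_bound q rho v : rowb q rho -> n1 (Kop q v) <= rho * n1 v.
Proof.
move=> hq; rewrite /n1 /Kop.
apply: (@le_trans _ _ (\sum_s' \sum_s `|v s| * `|q s s'|)).
  apply: ler_sum => s' _; apply: le_trans (ler_norm_sum _ _ _) _.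
  by apply: ler_sum => s _; rewrite normrM.
rewrite exchange_big /= mulr_sumr; apply: ler_sum => s _.
by rewrite -mulr_sumr mulrC; apply: ler_wpM2r; [exact: normr_ge0 | exact: hq].
Qed.

Lemma iter_bound q rho b t : 0 <= rho -> rowb q rho ->
  n1 (iter t (Kop q) b) <= rho ^+ t * n1 b.
Proof.
move=> r0 hq; elim: t => [|t IH]; first by rewrite expr0 mul1r.
rewrite iterS; apply: le_trans (Kop_bound _ hq) _.
by rewrite exprS -mulrA; apply: ler_wpM2l.
Qed.

Lemma fp_bound q rho g v r : rowb q rho -> 0 <= g ->
  (forall s', v s' = g * Kop q v s' + r s') -> (1 - g * rho) * n1 v <= n1 r.
Proof.
move=> hq g0 hv.
have h1 : n1 v <= g * n1 (Kop q v) + n1 r.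
  rewrite /n1 mulr_sumr -big_split /=; apply: ler_sum => s _.
  rewrite hv; apply: le_trans (ler_normD _ _) _; rewrite normrM ger0_norm //.
have h2 := Kop_bound v hq.
have h3 : g * n1 (Kop q v) <= g * (rho * n1 v) by apply: ler_wpM2l.
have := n1_ge0 v; nra.
Qed.

Lemma iter_ge0 q b t : (forall s s', 0 <= q s s') -> (forall s, 0 <= b s) ->
  forall s, 0 <= iter t (Kop q) b s.
Proof.
move=> q0 b0; elim: t => [|t IH] s //=.
by apply: sumr_ge0 => s1 _; apply: mulr_ge0.
Qed.

Section Neu.
Variables (q : S -> S -> R) (rho g : R) (b : S -> R).
Hypotheses (r0 : 0 <= rho) (hq : rowb q rho) (g0 : 0 <= g) (hgr : g * rho < 1).

Definition useq s := fun t => g ^+ t * iter t (Kop q) b s.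
Definition xsol s := limn (series (useq s)).

Lemma neu_cvg s : cvgn (series (useq s)).
Proof.
apply: normed_cvg.
have gr0 : 0 <= g * rho by apply: mulr_ge0.
apply: (@series_le_cvg R _ (geometric (n1 b) (g * rho))).
- by move=> n; exact: normr_ge0.
- by move=> n; rewrite /geometric /=; apply: mulr_ge0; [exact: n1_ge0 | exact: exprn_ge0].
- move=> n; rewrite /geometric /= /useq normrM ger0_norm ?exprn_ge0 //.
  apply: le_trans (ler_wpM2l (exprn_ge0 _ g0) (le_trans (le_n1 _ s) (iter_bound b n r0 hq))) _.
  by rewrite exprMn mulrA mulrC.
- by apply: is_cvg_geometric_series; rewrite ger0_norm.
Qed.

Lemma xsol_fp s' : xsol s' = b s' + g * \sum_s xsol s * q s s'.
Proof.
have e : forall n, series (useq s') n.+1 = b s' + g * \sum_s series (useq s) n * q s s'.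
  move=> n; rewrite /series /= big_nat_recl //= /useq expr0 mul1r /=.
  congr (_ + _).
  rewrite [RHS]mulr_sumr.
  rewrite [RHS](eq_bigr (fun s => \sum_(0 <= t < n) g * (g ^+ t * iter t (Kop q) b s * q s s'))); last first.
    by move=> s _; rewrite mulr_suml mulr_sumr.
  rewrite [RHS]exchange_big /=; apply: eq_bigr => t _.
  rewrite exprS /Kop mulr_sumr; apply: eq_bigr => s _; ring.
have c1 := @neu_cvg s'; rewrite -cvg_shiftS in c1.
have c2 : ((fun n => b s' + g * \sum_s series (useq s) n * q s s') @ \oo -->
          b s' + g * \sum_s xsol s * q s s')%classic.
  apply: cvgD; first exact: cvg_cst.
  apply: cvgMl_tmp; apply: cvg_big; first exact: add_continuous.
  by move=> s _; apply: cvgMr_tmp; exact: (@neu_cvg s).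
have ee : [sequence series (useq s') n.+1]_n = (fun n => b s' + g * \sum_s series (useq s) n * q s s').
  by apply: funext => n; exact: e n.
rewrite ee in c1.
have h1 := cvg_lim (@norm_hausdorff _ _) c1.
have h2 := cvg_lim (@norm_hausdorff _ _) c2.
rewrite h1 in h2; exact: h2.
Qed.

Lemma xsol_ge0 s : (forall s s', 0 <= q s s') -> (forall s, 0 <= b s) -> 0 <= xsol s.
Proof.
move=> q0 b0; apply: limr_ge; first exact: (@neu_cvg s).
apply: nearW => n; apply: sumr_ge0 => t _; apply: mulr_ge0; first exact: exprn_ge0.
exact: iter_ge0.
Qed.

End Neu.
End Neumann.

Lemma sum_prod_dffun (R : comNzRingType) (I : finType) (T : I -> finType)
  (f : forall i, T i -> R) :
  \sum_(a : {dffun forall i, T i}) \prod_i f i (a i) = \prod_i \sum_(t : T i) f i t.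
Proof.
pose P_ := fun i => [ffun t : T i => f i t].
transitivity (\sum_(t : fprod T) \prod_(i in I) P_ i (t i)).
  rewrite (reindex (@dffun_of_fprod I T)); last first.
    by apply: onW_bij; exact: dffun_of_fprod_bij.
  by apply: eq_bigr => t _; apply: eq_bigr => i _; rewrite /P_ !ffunE.
rewrite (@big_fprod R 0 1 *%R +%R I T P_).
rewrite [RHS](eq_bigr (fun i => \sum_(j in tagged_with T i) untag 0 (P_ i) j)); last first.
  move=> i _.
  have -> : \sum_(t : T i) f i t = \sum_(t : T i) P_ i t by apply: eq_bigr => t _; rewrite /P_ ffunE.
  exact: (@big_tag R 0 +%R I T (fun i t => P_ i t) i).
rewrite bigA_distr_big_dep; apply: eq_bigl => g //.
Qed.

Lemma frechet_pderiv (R : realType) (I : finType) (f : (I -> R) -> R) (x g : I -> R)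
  (blk : I -> bool) (k : I) : blk k ->
  (forall e : R, 0 < e -> exists d : R, 0 < d /\ forall h : I -> R,
     (forall k, ~~ blk k -> h k = 0) -> \sum_k `|h k| <= d ->
     `|f (fun k => x k + h k) - f x - \sum_k g k * h k| <= e * \sum_k `|h k|) ->
  pderiv f x k = g k.
Proof.
move=> bk H; rewrite /pderiv /derive1.
apply: cvg_lim; first exact: norm_hausdorff.
pose et := fun (t : R) (k' : I) => if k' == k then t else 0.
have phiE : forall t, (fun k' => if k' == k then x k' + t else x k') = (fun k' => x k' + et t k').
  by move=> t; apply: funext => k'; rewrite /et; case: eqP => _; rewrite ?addr0.
have phi0 : (fun k' => if k' == k then x k' + 0 else x k') = x.
  by apply: funext => k'; case: eqP => _; rewrite ?addr0.
have sg : forall t, \sum_k' g k' * et t k' = g k * t.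
  move=> t; rewrite (bigD1 k) //= /et eqxx big1 ?addr0 // => k' /negbTE ->; exact: mulr0.
have sn : forall t, \sum_k' `|et t k'| = `|t|.
  move=> t; rewrite (bigD1 k) //= /et eqxx big1 ?addr0 // => k' /negbTE ->; exact: normr0.
apply/cvgrPdist_le => e e0.
have [d [d0 Hd]] := H e e0.
exists d => // t /=; rewrite distrC subr0 => td t0.
rewrite addr0 phiE phi0.
have := Hd (et t) _ _.
rewrite sg sn => /(_ _ (ltW td)) h1.
have h1' : `|f (fun k' => x k' + et t k') - f x - g k * t| <= e * `|t|.
  apply: h1 => k' hk'; rewrite /et; case: eqP => // e'; by rewrite e' bk in hk'.
have tn : 0 < `|t| by rewrite normr_gt0.
rewrite -[X in `|X - _|](mulfK (t0 : t != 0)) mulrC -mulrBr normrM.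
rewrite normfV distrC.
have it : 0 <= `|t|^-1 by rewrite invr_ge0 ltW.
apply: le_trans (ler_wpM2l it h1') _.
by rewrite mulrCA mulVf ?gt_eqF // mulr1.
Qed.

Section MDP.
Variable R : realType.
Variables (N : nat) (S : finType) (A : 'I_N -> finType).
Variables (P : S -> jact A -> S -> R) (mu : S -> R) (gamma : R).
Hypotheses (HP0 : forall s a s', 0 <= P s a s') (HP1 : forall s a, \sum_(s' : S) P s a s' = 1)
  (Hmu0 : forall s, 0 <= mu s) (Hmu1 : \sum_(s : S) mu s = 1) (Hgamma : 0 < gamma < 1).

Local Notation pc := (pcoord S A).
Implicit Types pi : pc -> R.

Definition qk (pi : pc -> R) (s s' : S) : R := \sum_(a : jact A) jpol pi s a * P s a s'.
Definition xs (pi : pc -> R) : S -> R := fun s => xsol (qk pi) gamma mu s.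

Lemma g0 : 0 <= gamma. Proof. by case/andP: Hgamma => /ltW. Qed.
Lemma g1 : gamma < 1. Proof. by case/andP: Hgamma. Qed.

Lemma sumpc (f : pc -> R) : \sum_k f k = \sum_j \sum_(x : (S * A j)%type) f (mkc x).
Proof.
rewrite (@sig_big_dep _ 0 +%R 'I_N (fun j => (S * A j)%type) xpredT (fun _ _ => true) (fun j x => f (mkc x))) /=.
by apply: eq_bigr => -[j x].
Qed.

Lemma sumSA (T : finType) (f : (S * T)%type -> R) : \sum_x f x = \sum_s \sum_(a : T) f (s, a).
Proof. by rewrite pair_bigA; apply: eq_bigr => -[s a]. Qed.

Lemma Pi_ge0 pi : inPi pi -> forall k, 0 <= pi k.
Proof. by move=> H [j [s a]]; exact: (proj1 (H j s) a). Qed.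

Lemma Pi_le1 pi : inPi pi -> forall k, pi k <= 1.
Proof.
move=> H [j [s a]]; have [h0 h1] := H j s.
rewrite -h1 /restr (bigD1 a) //= lerDl; apply: sumr_ge0 => b _; exact: h0.
Qed.

Lemma jpol_sum pi : inPi pi -> forall s, \sum_a jpol pi s a = 1.
Proof.
move=> H s; rewrite /jpol.
rewrite (@sum_prod_dffun R _ A (fun j t => pi (mkc (s, t)))).
by apply: big1 => j _; exact: (proj2 (H j s)).
Qed.

Lemma jpol_ge0 pi : inPi pi -> forall s a, 0 <= jpol pi s a.
Proof. by move=> H s a; apply: prodr_ge0 => j _; exact: Pi_ge0. Qed.

Lemma qk_ge0 pi : inPi pi -> forall s s', 0 <= qk pi s s'.
Proof. by move=> H s s'; apply: sumr_ge0 => a _; apply: mulr_ge0; [exact: jpol_ge0|]. Qed.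

Lemma qk_sum pi : inPi pi -> forall s, \sum_s' qk pi s s' = 1.
Proof.
move=> H s; rewrite /qk exchange_big /= -(jpol_sum H s); apply: eq_bigr => a _.
by rewrite -mulr_sumr HP1 mulr1.
Qed.

Lemma rowb_Pi pi : inPi pi -> rowb (qk pi) 1.
Proof.
move=> H s; rewrite -(qk_sum H s) le_eqVlt; apply/orP; left; apply/eqP.
by apply: eq_bigr => s' _; rewrite ger0_norm //; exact: qk_ge0.
Qed.

Lemma xs_fp pi rho : 0 <= rho -> rowb (qk pi) rho -> gamma * rho < 1 ->
  forall s', xs pi s' = mu s' + gamma * \sum_s xs pi s * qk pi s s'.
Proof. move=> r0 hq hgr s'; exact: (xsol_fp mu r0 hq g0 hgr s'). Qed.

Lemma xs_fpPi pi : inPi pi -> forall s', xs pi s' = mu s' + gamma * \sum_s xs pi s * qk pi s s'.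
Proof. move=> H; apply: (xs_fp ler01 (rowb_Pi H)); rewrite mulr1; exact: g1. Qed.

Lemma xs_ge0 pi : inPi pi -> forall s, 0 <= xs pi s.
Proof.
move=> H s; apply: (xsol_ge0 (b:=mu) ler01 (rowb_Pi H) g0 _ s (qk_ge0 H) Hmu0).
rewrite mulr1; exact: g1.
Qed.

Lemma xs_sum pi : inPi pi -> (1 - gamma) * \sum_s xs pi s = 1.
Proof.
move=> H.
have e : \sum_s' xs pi s' = 1 + gamma * \sum_s xs pi s.
  transitivity (\sum_s' (mu s' + gamma * \sum_s xs pi s * qk pi s s')).
    by apply: eq_bigr => s' _; exact: xs_fpPi.
  rewrite big_split /= Hmu1 -mulr_sumr.
  congr (_ + _ * _); rewrite exchange_big /=; apply: eq_bigr => s _.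
  by rewrite -mulr_sumr qk_sum // mulr1.
rewrite mulrBl mul1r {1}e; ring.
Qed.

Lemma tsum_scale (u : nat -> R) (c : R) : cvgn (series u) ->
  tsum (fun t => u t * c) = tsum u * c.
Proof.
move=> cu; rewrite /tsum.
have e : (fun n => \sum_(0 <= t < n) u t * c) = (fun n => series u n * c).
  by apply: funext => n; rewrite /series /= mulr_suml.
rewrite e; apply: cvg_lim; first exact: norm_hausdorff.
exact: cvgMr_tmp.
Qed.

Lemma lam_eq pi rho : 0 <= rho -> rowb (qk pi) rho -> gamma * rho < 1 ->
  forall k, lam P mu gamma pi k = (1 - gamma) * (xs pi (tagged k).1 * pi k).
Proof.
move=> r0 hq hgr k; rewrite /lam; congr (_ * _).
have -> : (fun t => gamma ^+ t * (stlaw P mu pi t (tagged k).1 * pi k)) =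
   (fun t => (gamma ^+ t * stlaw P mu pi t (tagged k).1) * pi k).
  by apply: funext => t; rewrite mulrA.
rewrite (tsum_scale (u := fun t => gamma ^+ t * stlaw P mu pi t (tagged k).1)) //.
exact: (neu_cvg (b:=mu) r0 hq g0 hgr).
Qed.

Lemma lam_eqPi pi : inPi pi ->
  forall k, lam P mu gamma pi k = (1 - gamma) * (xs pi (tagged k).1 * pi k).
Proof. move=> H; apply: (lam_eq ler01 (rowb_Pi H)); rewrite mulr1; exact: g1. Qed.

Lemma dmu_eq pi : forall s, dmu P mu gamma pi s = (1 - gamma) * xs pi s.
Proof. by []. Qed.

Lemma lam_inLam pi : inPi pi -> inLam (lam P mu gamma pi).
Proof.
move=> H j; split.
  move=> [s a]; rewrite lam_eqPi //; apply: mulr_ge0; first by have := g1; lra.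
  by apply: mulr_ge0; [exact: xs_ge0 | exact: Pi_ge0].
rewrite sumSA -(xs_sum H) mulr_sumr; apply: eq_bigr => s _.
rewrite (eq_bigr (fun a => (1 - gamma) * xs pi s * pi (mkc (s, a)))); last first.
  by move=> a _; rewrite lam_eqPi // mulrA.
by rewrite -mulr_sumr (proj2 (H j s)) mulr1.
Qed.



Definition Hn (h : pc -> R) := \sum_k `|h k|.
Lemma Hn_ge0 h : 0 <= Hn h. Proof. by apply: sumr_ge0 => k _; exact: normr_ge0. Qed.
Lemma le_Hn h k : `|h k| <= Hn h.
Proof. rewrite /Hn (bigD1 k) //= lerDl; apply: sumr_ge0 => *; exact: normr_ge0. Qed.

Lemma n1_scale (c : R) (v : S -> R) : n1 (fun s => c * v s) = `|c| * n1 v.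
Proof. by rewrite /n1 mulr_sumr; apply: eq_bigr => s _; rewrite normrM. Qed.

Lemma Kop_sub q (v w : S -> R) s' : Kop q (fun s => v s - w s) s' = Kop q v s' - Kop q w s'.
Proof. by rewrite /Kop -sumrB; apply: eq_bigr => s _; rewrite mulrBl. Qed.

Lemma n1_mu : n1 mu = 1.
Proof. by rewrite /n1 -Hmu1; apply: eq_bigr => s _; rewrite ger0_norm. Qed.

Definition ek (k : pc) : pc -> R := fun k' => if k' == k then 1 else 0.
Lemma sum_ek (h : pc -> R) m : \sum_k h k * ek k m = h m.
Proof.
rewrite (bigD1 m) //= /ek eqxx mulr1 big1 ?addr0 // => k hk.
by rewrite eq_sym (negbTE hk) mulr0.
Qed.

Section Deriv.
Variable i : 'I_N.
Variable pis : pc -> R.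
Hypothesis Hpis : inPi pis.

Definition supp_i (h : pc -> R) := forall k, tag k != i -> h k = 0.
Definition cc (s : S) (a : jact A) := \prod_(j | j != i) pis (mkc (s, a j)).

Lemma cc_ge0 s a : 0 <= cc s a.
Proof. by apply: prodr_ge0 => j _; exact: Pi_ge0. Qed.
Lemma cc_le1 s a : cc s a <= 1.
Proof. by apply: prodr_ile1 => j _; rewrite Pi_ge0 ?Pi_le1. Qed.

Lemma jpol_split p : (forall k, tag k != i -> p k = pis k) ->
  forall s a, jpol p s a = cc s a * p (mkc (s, a i)).
Proof.
move=> hp s a; rewrite /jpol (bigD1 i) //= mulrC; congr (_ * _).
by apply: eq_bigr => j hj; apply: hp.
Qed.

Definition dq (h : pc -> R) s s' := \sum_a cc s a * h (mkc (s, a i)) * P s a s'.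
Definition padd (h : pc -> R) : pc -> R := fun k => pis k + h k.

Lemma padd_off h : supp_i h -> forall k, tag k != i -> padd h k = pis k.
Proof. by move=> Hh k hk; rewrite /padd Hh // addr0. Qed.

Lemma qk_padd h : supp_i h -> forall s s', qk (padd h) s s' = qk pis s s' + dq h s s'.
Proof.
move=> Hh s s'; rewrite /qk /dq -big_split /=; apply: eq_bigr => a _.
rewrite (jpol_split (padd_off Hh)) (jpol_split (fun _ _ => erefl)) /padd; ring.
Qed.

Definition J : R := (#|{: jact A}|)%:R.
Lemma J_ge0 : 0 <= J. Proof. exact: ler0n. Qed.

Lemma rowb_dq h : rowb (dq h) (J * Hn h).
Proof.
move=> s; rewrite /dq.
apply: (@le_trans _ _ (\sum_s' \sum_(a : jact A) `|h (mkc (s, a i))| * P s a s')).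
  apply: ler_sum => s' _; apply: le_trans (ler_norm_sum _ _ _) _; apply: ler_sum => a _.
  rewrite normrM (ger0_norm (HP0 _ _ _)) normrM (ger0_norm (cc_ge0 _ _)).
  apply: ler_wpM2r; first exact: HP0.
  by rewrite -{2}(mul1r `|_|); apply: ler_wpM2r; [exact: normr_ge0 | exact: cc_le1].
rewrite exchange_big /=.
apply: (@le_trans _ _ (\sum_(a : jact A) Hn h)).
  by apply: ler_sum => a _; rewrite -mulr_sumr HP1 mulr1; exact: le_Hn.
by rewrite sumr_const /J mulr_natl.
Qed.

Lemma rowb_padd h : supp_i h -> rowb (qk (padd h)) (1 + J * Hn h).
Proof.
move=> Hh s.
apply: (@le_trans _ _ (\sum_s' (`|qk pis s s'| + `|dq h s s'|))).
  by apply: ler_sum => s' _; rewrite qk_padd //; exact: ler_normD.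
by rewrite big_split /=; apply: lerD; [exact: rowb_Pi | exact: rowb_dq].
Qed.

Definition xst := xs pis.
Definition xh h := xs (padd h).
Definition Del h := fun s => xh h s - xst s.

Section Small.
Variable h : pc -> R.
Hypothesis Hh : supp_i h.
Hypothesis Hsm : gamma * (J * Hn h) <= (1 - gamma) / 2.

Lemma rho_ok : gamma * (1 + J * Hn h) < 1.
Proof. rewrite mulrDr mulr1; have := g1; have := Hsm; lra. Qed.
Lemma rho_ge0 : 0 <= 1 + J * Hn h.
Proof. by apply: addr_ge0 => //; apply: mulr_ge0; [exact: J_ge0 | exact: Hn_ge0]. Qed.

Lemma xh_fp s' : xh h s' = mu s' + gamma * \sum_s xh h s * qk (padd h) s s'.
Proof. exact: (xs_fp rho_ge0 (rowb_padd Hh) rho_ok). Qed.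

Lemma bX : (1 - gamma) * n1 (xh h) <= 2.
Proof.
have := @fp_bound R S (qk (padd h)) (1 + J * Hn h) gamma (xh h) mu (rowb_padd Hh) g0.
rewrite n1_mu => H.
have H1 := H (fun s' => etrans (xh_fp s') (addrC _ _)).
rewrite mulrDr mulr1 in H1.
have := n1_ge0 (xh h); have := g0; have := Hsm; nra.
Qed.

Lemma Del_fp s' : Del h s' = gamma * Kop (qk pis) (Del h) s' + gamma * Kop (dq h) (xh h) s'.
Proof.
rewrite /Del {1}xh_fp /xst {1}(xs_fpPi Hpis s') Kop_sub /Kop.
have -> : \sum_s xh h s * qk (padd h) s s' =
   \sum_s xh h s * qk pis s s' + \sum_s xh h s * dq h s s'.
  by rewrite -big_split; apply: eq_bigr => s _ /=; rewrite qk_padd // mulrDr.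
ring.
Qed.

Lemma bD : (1 - gamma) * n1 (Del h) <= gamma * (J * Hn h) * n1 (xh h).
Proof.
have := @fp_bound R S (qk pis) 1 gamma (Del h) (fun s' => gamma * Kop (dq h) (xh h) s')
  (rowb_Pi Hpis) g0 Del_fp.
rewrite mulr1 n1_scale ger0_norm ?g0 // => H; apply: le_trans H _.
rewrite -mulrA; apply: ler_wpM2l; first exact: g0.
exact: Kop_bound (rowb_dq h).
Qed.

End Small.

Definition bY (k : pc) : S -> R := fun s' => gamma * Kop (dq (ek k)) xst s'.
Definition Y (k : pc) : S -> R := fun s => xsol (qk pis) gamma (bY k) s.
Definition yh (h : pc -> R) : S -> R := fun s => \sum_k h k * Y k s.

Lemma Y_fp k s' : Y k s' = bY k s' + gamma * \sum_s Y k s * qk pis s s'.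
Proof. apply: (xsol_fp (bY k) ler01 (rowb_Pi Hpis) g0); rewrite mulr1; exact: g1. Qed.

Lemma dq_lin h s s' : dq h s s' = \sum_k h k * dq (ek k) s s'.
Proof.
rewrite /dq.
transitivity (\sum_(a : jact A) \sum_k h k * (cc s a * ek k (mkc (s, a i)) * P s a s')).
  apply: eq_bigr => a _.
  rewrite (eq_bigr (fun k => (cc s a * P s a s') * (h k * ek k (mkc (s, a i))))); last first.
    by move=> k _; ring.
  by rewrite -mulr_sumr sum_ek; ring.
rewrite exchange_big /=; apply: eq_bigr => k _; by rewrite mulr_sumr.
Qed.

Lemma Kop_dq_lin h (v : S -> R) s' : Kop (dq h) v s' = \sum_k h k * Kop (dq (ek k)) v s'.
Proof.
rewrite /Kop.
transitivity (\sum_s \sum_k h k * (v s * dq (ek k) s s')).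
  by apply: eq_bigr => s _; rewrite dq_lin mulr_sumr; apply: eq_bigr => k _; ring.
by rewrite exchange_big /=; apply: eq_bigr => k _; rewrite mulr_sumr.
Qed.

Lemma yh_fp h s' : yh h s' = gamma * Kop (qk pis) (yh h) s' + gamma * Kop (dq h) xst s'.
Proof.
rewrite /yh (eq_bigr (fun k => h k * bY k s' + gamma * (\sum_s h k * Y k s * qk pis s s'))); last first.
  move=> k _; rewrite Y_fp mulrDr; congr (_ + _).
  by rewrite mulrCA; congr (_ * _); rewrite mulr_sumr; apply: eq_bigr => s _; ring.
rewrite big_split /= addrC; congr (_ + _).
  rewrite -mulr_sumr /Kop; congr (_ * _); rewrite exchange_big /=; apply: eq_bigr => s _.
  by rewrite mulr_suml.
rewrite Kop_dq_lin /bY mulr_sumr; apply: eq_bigr => k _; ring.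
Qed.

Definition Eh (h : pc -> R) : S -> R := fun s => Del h s - yh h s.

Definition lin (h : pc -> R) : pc -> R :=
  fun k => (1 - gamma) * (yh h (tagged k).1 * pis k + xst (tagged k).1 * h k).
Definition DL (h : pc -> R) : pc -> R := fun k => lam P mu gamma (padd h) k - lam P mu gamma pis k.
Definition remL (h : pc -> R) : pc -> R := fun k => DL h k - lin h k.

Lemma bound_form (a b : S -> R) (h : pc -> R) :
  Hn (fun k => (1 - gamma) * (a (tagged k).1 * pis k + b (tagged k).1 * h k)) <=
  (1 - gamma) * ((#|{: pc}|)%:R * n1 a + n1 b * Hn h).
Proof.
have a0 : 0 <= 1 - gamma by have := g1; lra.
rewrite /Hn.
apply: (@le_trans _ _ (\sum_k (1 - gamma) * (n1 a + n1 b * `|h k|))).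
  apply: ler_sum => k _; rewrite normrM ger0_norm //; apply: ler_wpM2l => //.
  apply: le_trans (ler_normD _ _) _; apply: lerD.
    rewrite normrM -[X in _ <= X]mulr1; apply: ler_pM; try exact: normr_ge0.
      exact: le_n1.
    by rewrite ger0_norm ?Pi_le1 ?Pi_ge0.
  by rewrite normrM; apply: ler_wpM2r; [exact: normr_ge0 | exact: le_n1].
rewrite -mulr_sumr; apply: ler_wpM2l => //.
by rewrite big_split /= sumr_const mulr_natl -mulr_sumr.
Qed.

Section Small2.
Variable h : pc -> R.
Hypothesis Hh : supp_i h.
Hypothesis Hsm : gamma * (J * Hn h) <= (1 - gamma) / 2.

Lemma E_fp s' : Eh h s' = gamma * Kop (qk pis) (Eh h) s' + gamma * Kop (dq h) (Del h) s'.
Proof.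
rewrite /Eh (Del_fp Hh Hsm) yh_fp Kop_sub /Del Kop_sub Kop_sub; ring.
Qed.

Lemma bE : (1 - gamma) * n1 (Eh h) <= gamma * (J * Hn h) * n1 (Del h).
Proof.
have := @fp_bound R S (qk pis) 1 gamma (Eh h) (fun s' => gamma * Kop (dq h) (Del h) s')
  (rowb_Pi Hpis) g0 E_fp.
rewrite mulr1 n1_scale ger0_norm ?g0 // => H; apply: le_trans H _.
rewrite -mulrA; apply: ler_wpM2l; first exact: g0.
exact: Kop_bound (rowb_dq h).
Qed.

Lemma DL_eq : DL h = fun k => (1 - gamma) * (Del h (tagged k).1 * pis k + xh h (tagged k).1 * h k).
Proof.
apply: funext => k; rewrite /DL (lam_eq (rho_ge0 h) (rowb_padd Hh) (rho_ok Hsm)) lam_eqPi //.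
rewrite /Del /xh /xst /padd; ring.
Qed.

Lemma remL_eq : remL h = fun k => (1 - gamma) * (Eh h (tagged k).1 * pis k + Del h (tagged k).1 * h k).
Proof.
apply: funext => k; rewrite /remL DL_eq /lin /Eh /Del /=; ring.
Qed.

End Small2.

Lemma divb (a u v : R) : 0 < a -> a * u <= v -> u <= v * a^-1.
Proof.
move=> a0 H.
have e : u = (a * u) * a^-1 by rewrite mulrC mulrA mulVf ?gt_eqF // mul1r.
rewrite e; apply: ler_wpM2r => //; by rewrite invr_ge0 ltW.
Qed.

Definition ga := 1 - gamma.
Lemma ga_gt0 : 0 < ga. Proof. rewrite /ga; have := g1; lra. Qed.
Definition K1 := 2 * gamma * J * ga^-1 ^+ 2.
Definition K2 := gamma * J * ga^-1 * K1.
Definition C4 := ga * (#|{: pc}|)%:R * K1 + 2.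
Definition C3 := ga * ((#|{: pc}|)%:R * K2 + K1).

Lemma K1_ge0 : 0 <= K1.
Proof. rewrite /K1; apply: mulr_ge0; last by apply: exprn_ge0; rewrite invr_ge0 ltW // ga_gt0.
by apply: mulr_ge0; [apply: mulr_ge0 => //; exact: g0 | exact: J_ge0]. Qed.
Lemma K2_ge0 : 0 <= K2.
Proof. rewrite /K2; apply: mulr_ge0; last exact: K1_ge0.
apply: mulr_ge0; last by rewrite invr_ge0 ltW // ga_gt0.
by apply: mulr_ge0; [exact: g0 | exact: J_ge0]. Qed.
Lemma C4_ge0 : 0 <= C4.
Proof. rewrite /C4; apply: addr_ge0 => //; apply: mulr_ge0; last exact: K1_ge0.
by apply: mulr_ge0; [exact: ltW ga_gt0 | exact: ler0n]. Qed.
Lemma C3_ge0 : 0 <= C3.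
Proof. rewrite /C3; apply: mulr_ge0; first exact: ltW ga_gt0.
by apply: addr_ge0; [apply: mulr_ge0; [exact: ler0n | exact: K2_ge0] | exact: K1_ge0]. Qed.

Section Small3.
Variable h : pc -> R.
Hypothesis Hh : supp_i h.
Hypothesis Hsm : gamma * (J * Hn h) <= (1 - gamma) / 2.

Lemma gJH_ge0 : 0 <= gamma * (J * Hn h).
Proof. by apply: mulr_ge0; [exact: g0 | apply: mulr_ge0; [exact: J_ge0 | exact: Hn_ge0]]. Qed.

Lemma LX : n1 (xh h) <= 2 * ga^-1.
Proof. exact: (divb ga_gt0 (bX Hh Hsm)). Qed.

Lemma LD : n1 (Del h) <= K1 * Hn h.
Proof.
have h1 := bD Hh Hsm.
have h2 : gamma * (J * Hn h) * n1 (xh h) <= gamma * (J * Hn h) * (2 * ga^-1).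
  by apply: ler_wpM2l; [exact: gJH_ge0 | exact: LX].
have := divb ga_gt0 (le_trans h1 h2).
by have -> : K1 * Hn h = gamma * (J * Hn h) * (2 * ga^-1) * ga^-1 by rewrite /K1; ring.
Qed.

Lemma LE : n1 (Eh h) <= K2 * Hn h ^+ 2.
Proof.
have h1 := bE Hh Hsm.
have h2 : gamma * (J * Hn h) * n1 (Del h) <= gamma * (J * Hn h) * (K1 * Hn h).
  by apply: ler_wpM2l; [exact: gJH_ge0 | exact: LD].
have := divb ga_gt0 (le_trans h1 h2).
by have -> : K2 * Hn h ^+ 2 = gamma * (J * Hn h) * (K1 * Hn h) * ga^-1 by rewrite /K2; ring.
Qed.

Lemma LDL : Hn (DL h) <= C4 * Hn h.
Proof.
rewrite (DL_eq Hh Hsm).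
apply: le_trans (bound_form _ _ _) _.
have H0 := Hn_ge0 h.
apply: (@le_trans _ _ (ga * ((#|{: pc}|)%:R * (K1 * Hn h) + (2 * ga^-1) * Hn h))).
  apply: ler_wpM2l; first exact: ltW ga_gt0.
  apply: lerD; first by apply: ler_wpM2l; [exact: ler0n | exact: LD].
  by apply: ler_wpM2r => //; exact: LX.
rewrite le_eqVlt; apply/orP; left; apply/eqP; rewrite /C4; field.
by rewrite gt_eqF // ga_gt0.
Qed.

Lemma Lrem : Hn (remL h) <= C3 * Hn h ^+ 2.
Proof.
rewrite (remL_eq Hh Hsm).
apply: le_trans (bound_form _ _ _) _.
have H0 := Hn_ge0 h.
apply: (@le_trans _ _ (ga * ((#|{: pc}|)%:R * (K2 * Hn h ^+ 2) + (K1 * Hn h) * Hn h))).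
  apply: ler_wpM2l; first exact: ltW ga_gt0.
  apply: lerD; first by apply: ler_wpM2l; [exact: ler0n | exact: LE].
  by apply: ler_wpM2r => //; exact: LD.
rewrite le_eqVlt; apply/orP; left; apply/eqP; rewrite /C3; ring.
Qed.

End Small3.

Variable F : forall i : 'I_N, (pc -> R) -> (pcoord_mi S A i -> R) -> R.
Hypothesis HFd : diffble (Fjoint F i) (joinv i (lam P mu gamma pis) (pminus i pis)).

Lemma util_frechet : exists g : pc -> R, forall e : R, 0 < e -> exists d : R, 0 < d /\
  forall h, supp_i h -> Hn h <= d ->
  `|util P mu gamma F i (padd h) - util P mu gamma F i pis - \sum_k g k * h k| <= e * Hn h.
Proof.
have [gF HgF] := HFd.
pose g := fun k => \sum_k' gF (inl k') * ((1 - gamma) *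
   (Y k (tagged k').1 * pis k' + xst (tagged k').1 * ek k k')).
have lin_eq : forall h, \sum_k' gF (inl k') * lin h k' = \sum_k g k * h k.
  move=> h; rewrite /g.
  under [RHS]eq_bigr => k _ do rewrite mulr_suml.
  rewrite [RHS]exchange_big; apply: eq_bigr => k' _ /=.
  rewrite /lin /yh -(sum_ek h k') mulr_suml.
  rewrite [xst _ * _]mulr_sumr -big_split /= !mulr_sumr; apply: eq_bigr => k _; ring.
exists g => e e0.
pose G := \sum_k `|gF (inl k)|.
have G0 : 0 <= G by apply: sumr_ge0 => k _; exact: normr_ge0.
have C40 := C4_ge0; have C30 := C3_ge0.
pose eF := e / (2 * (C4 + 1)).
have eF0 : 0 < eF by rewrite /eF divr_gt0 // mulr_gt0 // ltr_pwDr.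
have [dF [dF0 HdF]] := HgF eF eF0.
have gJ0 : 0 < gamma * (J + 1).
  by apply: mulr_gt0; [by case/andP: Hgamma | rewrite ltr_pwDr // J_ge0].
pose d0 := (1 - gamma) / (2 * (gamma * (J + 1))).
pose d1 := dF / (C4 + 1).
pose d2 := e / (2 * (G * C3 + 1)).
have GC0 : 0 <= G * C3 by apply: mulr_ge0.
have d00 : 0 < d0 by apply: divr_gt0; [have := g1; lra | apply: mulr_gt0].
have d10 : 0 < d1 by rewrite /d1 divr_gt0 // ltr_pwDr.
have d20 : 0 < d2 by rewrite /d2 divr_gt0 // mulr_gt0 // ltr_pwDr.
have f0 : d0 * (gamma * (J + 1)) = (1 - gamma) / 2.
  have gp : 0 < gamma by case/andP: Hgamma.
  have Jp : 0 < J + 1 by rewrite ltr_pwDr // J_ge0.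
  by rewrite /d0; field; rewrite (gt_eqF Jp) (gt_eqF gp).
have f1 : d1 * (C4 + 1) = dF by rewrite /d1; field; rewrite gt_eqF // ltr_pwDr.
have f2 : d2 * (G * C3 + 1) = e / 2 by rewrite /d2; field; rewrite gt_eqF // ltr_pwDr.
have f3 : eF * (C4 + 1) = e / 2 by rewrite /eF; field; rewrite gt_eqF // ltr_pwDr.
exists (Num.min d0 (Num.min d1 d2)); split; first by rewrite !lt_min d00 d10 d20.
move=> h Hh; rewrite !le_min => /andP[hd0 /andP[hd1 hd2]].
have H0 := Hn_ge0 h.
have Hsm : gamma * (J * Hn h) <= (1 - gamma) / 2.
  have gH : 0 <= gamma * Hn h by apply: mulr_ge0 => //; exact: g0.
  have := J_ge0; have := g0; nra.
have HDL := LDL Hh Hsm; have Hrem := Lrem Hh Hsm.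
have HF := HdF (joinv i (DL h) (fun _ => 0)) _.
have {}HF : `|util P mu gamma F i (padd h) - util P mu gamma F i pis -
     \sum_k gF (inl k) * DL h k| <= eF * Hn (DL h).
  have e1 : Fjoint F i (fun z => joinv i (lam P mu gamma pis) (pminus i pis) z +
                 joinv i (DL h) (fun _ => 0) z) = util P mu gamma F i (padd h).
    rewrite /Fjoint /util; apply: (congr2 (@F i)); apply: funext => k /=.
      by rewrite /DL; ring.
    by rewrite /pminus /padd addr0 Hh ?addr0 //; exact: valP k.
  have e3 : \sum_z gF z * joinv i (DL h) (fun _ => 0) z = \sum_k gF (inl k) * DL h k.
    by rewrite big_sumType /= [X in _ + X]big1 ?addr0 // => k _; rewrite mulr0.
  have e4 : \sum_z `|joinv i (DL h) (fun _ => 0) z| = Hn (DL h).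
    by rewrite big_sumType /= [X in _ + X]big1 ?addr0 // => k _; rewrite normr0.
  rewrite -e1 -e3 -e4; apply: HF => -[k|k] /=.
    apply: le_trans (le_Hn _ k) _; apply: le_trans HDL _.
    have := C40; nra.
  by rewrite normr0 ltW.
have eDL : \sum_k gF (inl k) * DL h k = \sum_k g k * h k + \sum_k gF (inl k) * remL h k.
  rewrite -lin_eq -big_split /=; apply: eq_bigr => k _; rewrite /remL; ring.
have Hr : `|\sum_k gF (inl k) * remL h k| <= G * Hn (remL h).
  apply: le_trans (ler_norm_sum _ _ _) _; rewrite /G mulr_suml; apply: ler_sum => k _.
  by rewrite normrM; apply: ler_wpM2l; [exact: normr_ge0 | exact: le_Hn].
rewrite eDL in HF.
have tri : `|util P mu gamma F i (padd h) - util P mu gamma F i pis - \sum_k g k * h k| <=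
   eF * Hn (DL h) + G * Hn (remL h).
  apply: le_trans _ (lerD HF Hr).
  apply: le_trans _ (ler_normD _ _); rewrite le_eqVlt; apply/orP; left; apply/eqP.
  congr `|_|; ring.
apply: le_trans tri _.
have t1 : eF * Hn (DL h) <= eF * (C4 * Hn h) by apply: ler_wpM2l => //; exact: ltW.
have t2 : G * Hn (remL h) <= G * (C3 * Hn h ^+ 2) by apply: ler_wpM2l.
have t3 : G * (C3 * Hn h ^+ 2) <= e / 2 * Hn h.
  rewrite expr2 mulrA mulrA; apply: ler_wpM2r => //.
  rewrite -f2; have := GC0; nra.
have t4 : eF * (C4 * Hn h) <= e / 2 * Hn h.
  rewrite mulrA; apply: ler_wpM2r => //; rewrite -f3; have := ltW eF0; nra.
have := lerD t1 t2; have := lerD t4 t3; lra.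
Qed.

Implicit Types (p q : pc -> R).
Definition VIi := forall pi' : pc -> R, inPi pi' -> (forall k, tag k != i -> pi' k = pis k) ->
  \sum_k vfield P mu gamma F pis k * (pi' k - pis k) <= 0.
Definition NashI := forall pi' : pc -> R, inPi pi' -> (forall k, tag k != i -> pi' k = pis k) ->
  util P mu gamma F i pi' <= util P mu gamma F i pis.

Lemma grad_frechet : exists g : pc -> R,
  (forall e : R, 0 < e -> exists d : R, 0 < d /\
    forall h, supp_i h -> Hn h <= d ->
    `|util P mu gamma F i (padd h) - util P mu gamma F i pis - \sum_k g k * h k| <= e * Hn h)
  /\ forall k, tag k = i -> vfield P mu gamma F pis k = g k.
Proof.
have [g Hg] := util_frechet.
exists g; split => // k e.
rewrite /vfield e.
apply: (frechet_pderiv (blk := fun k : pc => tag k == i)); first by rewrite e.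
exact: Hg.
Qed.

Lemma le0_eps (x W : R) : 0 <= W -> (forall e, 0 < e -> x <= e * W) -> x <= 0.
Proof.
move=> W0 H; rewrite leNgt; apply/negP => x0.
have e0 : 0 < x / (2 * (W + 1)) by rewrite divr_gt0 // mulr_gt0 // ltr_pwDr.
have := H _ e0.
have -> : x / (2 * (W + 1)) * W = x * (W / (2 * (W + 1))) by rewrite mulrAC -mulrA.
have : W / (2 * (W + 1)) < 1.
  rewrite ltr_pdivrMr ?mulr_gt0 ?ltr_pwDr // mul1r; lra.
have : 0 <= W / (2 * (W + 1)) by rewrite divr_ge0 // mulr_ge0 // addr_ge0.
nra.
Qed.

Lemma inPi_conv p q t : inPi p -> inPi q -> 0 <= t <= 1 -> inPi (fun k => p k + t * (q k - p k)).
Proof.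
move=> Hp Hq /andP[t0 t1] j s; split.
  move=> a; have := proj1 (Hp j s) a; have := proj1 (Hq j s) a; rewrite /restr /=.
  have -> : p (mkc (s, a)) + t * (q (mkc (s, a)) - p (mkc (s, a))) =
            (1 - t) * p (mkc (s, a)) + t * q (mkc (s, a)) by ring.
  move=> h1 h2; apply: addr_ge0; apply: mulr_ge0 => //; lra.
rewrite /restr big_split /= -mulr_sumr sumrB.
by have := proj2 (Hp j s); have := proj2 (Hq j s); rewrite /restr => -> ->; ring.
Qed.

Lemma sum_vf_g g : (forall k, tag k = i -> vfield P mu gamma F pis k = g k) ->
  forall pi' : pc -> R, (forall k, tag k != i -> pi' k = pis k) ->
  \sum_k vfield P mu gamma F pis k * (pi' k - pis k) = \sum_k g k * (pi' k - pis k).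
Proof.
move=> Hg pi' Hoff; apply: eq_bigr => k _.
case: (eqVneq (tag k) i) => [e|ne]; first by rewrite Hg.
by rewrite Hoff // subrr !mulr0.
Qed.

Lemma Nash_VI : NashI -> VIi.
Proof.
move=> NI pi' Hpi' Hoff.
have [g [Hg Hgv]] := grad_frechet.
rewrite (sum_vf_g Hgv Hoff).
pose w := fun k => pi' k - pis k.
have W0 := Hn_ge0 w.
apply: (le0_eps W0) => e e0.
have [d [d0 Hd]] := Hg e e0.
pose t := Num.min 1 (d / (Hn w + 1)).
have t0 : 0 < t by rewrite lt_min ltr01 divr_gt0 // ltr_pwDr.
have t1 : t <= 1 by rewrite ge_min lexx.
have tW : t * Hn w <= d.
  have : t <= d / (Hn w + 1) by rewrite ge_min lexx orbT.
  rewrite ler_pdivlMr ?ltr_pwDr // => h; nra.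
pose h := fun k => t * w k.
have Hh : supp_i h by move=> k hk; rewrite /h /w Hoff // subrr mulr0.
have Hnh : Hn h = t * Hn w.
  by rewrite /Hn mulr_sumr; apply: eq_bigr => k _; rewrite normrM ger0_norm // ltW.
have Hsum : \sum_k g k * h k = t * \sum_k g k * w k.
  by rewrite mulr_sumr; apply: eq_bigr => k _; rewrite /h; ring.
have Hd' := Hd h Hh.
rewrite Hnh Hsum in Hd'.
have {}Hd' := Hd' tW.
have Hin : inPi (padd h).
  by apply: (inPi_conv Hpis Hpi'); rewrite (ltW t0) t1.
have hu := NI _ Hin (padd_off Hh).
move: Hd'; rewrite ler_norml => /andP[lo _].
have : t * \sum_k g k * w k <= t * (e * Hn w) by lra.
by rewrite ler_pM2l.
Qed.

Hypothesis HA1i : forall l l' : pc -> R, inLam l -> inLam l' -> forall t : R, 0 <= t <= 1 ->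
   t * @F i l (pminus i pis) + (1 - t) * @F i l' (pminus i pis) <=
   @F i (fun k => t * l k + (1 - t) * l' k) (pminus i pis).
Hypothesis HA2 : forall pi : pc -> R, inPi pi -> forall s, 0 < dmu P mu gamma pi s.

Lemma xs_gt0 pi : inPi pi -> forall s, 0 < xs pi s.
Proof.
move=> H s; have := HA2 H s; rewrite dmu_eq pmulr_rgt0 //; have := g1; lra.
Qed.

Section Curve.
Variable pi' : pc -> R.
Hypothesis Hpi' : inPi pi'.
Hypothesis Hoff : forall k, tag k != i -> pi' k = pis k.
Variable t : R.
Hypothesis t0 : 0 <= t.
Hypothesis t1 : 2 * t <= 1.

Definition xp := xs pi'.
Definition dt (s : S) := (1 - t) * xst s + t * xp s.
Lemma dt_gt0 s : 0 < dt s.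
Proof.
have := xs_gt0 Hpis s; have := xs_ge0 Hpi' s; rewrite /dt /xst /xp => h1 h2.
have : 0 < (1 - t) * xs pis s.
  apply: mulr_gt0 => //; move: t1; lra.
have : 0 <= t * xs pi' s by apply: mulr_ge0.
have := t0; have := t1; lra.
Qed.
Lemma dt_ge s : xst s / 2 <= dt s.
Proof.
have := xs_gt0 Hpis s; have := xs_ge0 Hpi' s; rewrite /dt /xst /xp => h1 h2.
have : 0 <= t * xs pi' s by apply: mulr_ge0.
have := t0; have := t1; nra.
Qed.

Definition pit : pc -> R := fun k => if tag k == i then
  ((1 - t) * xst (tagged k).1 * pis k + t * xp (tagged k).1 * pi' k) / dt (tagged k).1
  else pis k.

Lemma pit_off k : tag k != i -> pit k = pis k.
Proof. by move=> hk; rewrite /pit (negbTE hk). Qed.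

Lemma pit_on s (a : A i) : pit (mkc (s, a)) =
  ((1 - t) * xst s * pis (mkc (s, a)) + t * xp s * pi' (mkc (s, a))) / dt s.
Proof. by rewrite /pit /= eqxx. Qed.

Lemma inPi_pit : inPi pit.
Proof.
move=> j s; case: (eqVneq j i) => [ej|nj]; last first.
  by have := Hpis j s; rewrite /restr /pit /= (negbTE nj).
subst j; split.
  move=> a; rewrite /restr pit_on; apply: divr_ge0; last exact: ltW (dt_gt0 s).
  apply: addr_ge0; apply: mulr_ge0; try exact: Pi_ge0.
    by apply: mulr_ge0; [move: t1; lra | exact: xs_ge0].
  by apply: mulr_ge0 => //; exact: xs_ge0.
rewrite /restr (eq_bigr (fun a => ((1 - t) * xst s * pis (mkc (s, a)) +
   t * xp s * pi' (mkc (s, a))) / dt s)); last by move=> a _; rewrite pit_on.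
rewrite -mulr_suml big_split /= -!mulr_sumr.
have := proj2 (Hpis i s); have := proj2 (Hpi' i s); rewrite /restr => -> ->.
by rewrite !mulr1 -/(dt s) divff // gt_eqF // dt_gt0.
Qed.

Lemma jpol_pit s a : jpol pit s a =
  ((1 - t) * xst s * jpol pis s a + t * xp s * jpol pi' s a) / dt s.
Proof.
rewrite (jpol_split pit_off) (jpol_split (fun _ _ => erefl)) (jpol_split Hoff) pit_on.
field; by rewrite gt_eqF // dt_gt0.
Qed.

Lemma qk_pit s s' : dt s * qk pit s s' = (1 - t) * xst s * qk pis s s' + t * xp s * qk pi' s s'.
Proof.
rewrite /qk !mulr_sumr -big_split /=; apply: eq_bigr => a _.
rewrite jpol_pit; field; by rewrite gt_eqF // dt_gt0.
Qed.

Lemma dt_fp s' : dt s' = mu s' + gamma * \sum_s dt s * qk pit s s'.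
Proof.
rewrite (eq_bigr (fun s => (1 - t) * (xst s * qk pis s s') + t * (xp s * qk pi' s s'))); last first.
  by move=> s _; rewrite qk_pit; ring.
rewrite big_split /= -!mulr_sumr /dt /xst /xp.
rewrite {1}(xs_fpPi Hpis s') {1}(xs_fpPi Hpi' s'); ring.
Qed.

Lemma xs_pit : xs pit = dt.
Proof.
pose v := fun s => xs pit s - dt s.
have hv : forall s', v s' = gamma * Kop (qk pit) v s' + (fun _ => 0) s'.
  move=> s'; rewrite /v Kop_sub /Kop addr0 {1}(xs_fpPi inPi_pit s') {1}dt_fp; ring.
have := @fp_bound R S (qk pit) 1 gamma v (fun _ => 0) (rowb_Pi inPi_pit) g0 hv.
have -> : n1 (fun _ : S => 0 : R) = 0 by rewrite /n1 big1 // => s _; rewrite normr0.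
move=> hb.
have n0 : n1 v <= 0.
  have := n1_ge0 v; have := g1; rewrite mulr1 in hb; nra.
apply: funext => s; apply/eqP; rewrite -subr_eq0 -normr_le0.
by apply: le_trans (le_n1 v s) n0.
Qed.

Lemma lam_pit : lam P mu gamma pit = fun k => t * lam P mu gamma pi' k + (1 - t) * lam P mu gamma pis k.
Proof.
apply: funext => k; rewrite (lam_eqPi inPi_pit) (lam_eqPi Hpi') (lam_eqPi Hpis) xs_pit.
rewrite /pit; case: eqP => hk.
  rewrite -/(xst _) -/(xp _); field; by rewrite gt_eqF // dt_gt0.
rewrite Hoff; last by apply/eqP.
rewrite /dt /xst /xp; ring.
Qed.

Lemma pminus_off p : (forall k, tag k != i -> p k = pis k) -> pminus i p = pminus i pis.
Proof. by move=> hp; apply: funext => k; rewrite /pminus hp //; exact: valP k. Qed.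

Lemma util_pit : t * util P mu gamma F i pi' + (1 - t) * util P mu gamma F i pis <=
  util P mu gamma F i pit.
Proof.
rewrite /util (pminus_off Hoff) (pminus_off pit_off) lam_pit.
apply: HA1i; [exact: lam_inLam | exact: lam_inLam |].
by rewrite t0 /=; move: t1 t0; lra.
Qed.

Definition Wb := \sum_s 2 * xp s / xst s.
Lemma Wb_ge0 : 0 <= Wb.
Proof.
apply: sumr_ge0 => s _; apply: divr_ge0; last exact: ltW (xs_gt0 Hpis s).
by apply: mulr_ge0 => //; exact: xs_ge0.
Qed.

Lemma pit_bound k : `|pit k - pis k| <= t * Wb.
Proof.
have tW : 0 <= t * Wb by apply: mulr_ge0 => //; exact: Wb_ge0.
case: (eqVneq (tag k) i) => hk; last by rewrite pit_off // subrr normr0.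
set s := (tagged k).1.
have dpos := dt_gt0 s.
have xpos := xs_gt0 Hpis s.
have xp0 : 0 <= xp s by exact: xs_ge0.
have e : pit k - pis k = t * xp s * (pi' k - pis k) / dt s.
  have hk' : (tag k == i) = true by apply/eqP.
  rewrite /pit hk' -/s; move: dpos; rewrite /dt => dpos'; field; rewrite gt_eqF //.
have hd : `|pi' k - pis k| <= 1.
  rewrite ler_norml; have := Pi_ge0 Hpis k; have := Pi_le1 Hpis k;
  have := Pi_ge0 Hpi' k; have := Pi_le1 Hpi' k; lra.
have hW : 2 * xp s / xst s <= Wb.
  rewrite /Wb (bigD1 s) //= lerDl; apply: sumr_ge0 => s' _; apply: divr_ge0.
    by apply: mulr_ge0 => //; exact: xs_ge0.
  exact: ltW (xs_gt0 Hpis s').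
rewrite e normrM normfV (gtr0_norm dpos) ler_pdivrMr // normrM (ger0_norm (mulr_ge0 t0 xp0)).
apply: (@le_trans _ _ (t * xp s)).
  by rewrite -[X in _ <= X]mulr1; apply: ler_wpM2l => //; exact: mulr_ge0.
have hge := dt_ge s.
have : xp s <= Wb * (xst s / 2).
  have : 2 * xp s / xst s * (xst s / 2) = xp s by field; rewrite gt_eqF.
  move=> <-; apply: ler_wpM2r => //; apply: divr_ge0 => //; exact: ltW.
move=> h3.
have : Wb * (xst s / 2) <= Wb * dt s by apply: ler_wpM2l => //; exact: Wb_ge0.
move=> h4; rewrite -mulrA; apply: ler_wpM2l => //; exact: le_trans h3 h4.
Qed.

End Curve.

Lemma VI_Nash : VIi -> NashI.
Proof.
move=> VI pi' Hpi' Hoff.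
have [g [Hg Hgv]] := grad_frechet.
suff : util P mu gamma F i pi' - util P mu gamma F i pis <= 0 by lra.
pose W := (#|{: pc}|)%:R * Wb pi'.
have W0 : 0 <= W by apply: mulr_ge0; [exact: ler0n | exact: Wb_ge0].
apply: (le0_eps W0) => e e0.
have [d [d0 Hd]] := Hg e e0.
pose t := Num.min (2^-1) (d / (W + 1)).
have t0 : 0 < t by rewrite lt_min invr_gt0 ltr0n divr_gt0 // ltr_pwDr.
have t1 : 2 * t <= 1.
  have : t <= 2^-1 by rewrite ge_min lexx.
  by rewrite -(ler_pM2l (ltr0n _ 2)) mulfV.
have tW : t * W <= d.
  have : t <= d / (W + 1) by rewrite ge_min lexx orbT.
  rewrite ler_pdivlMr ?ltr_pwDr // => h; nra.
pose pt := pit pi' t.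
pose h := fun k => pt k - pis k.
have Hh : supp_i h by move=> k hk; rewrite /h /pt pit_off // subrr.
have Hnh : Hn h <= t * W.
  rewrite /Hn /W mulrCA.
  apply: (@le_trans _ _ (\sum_(k : pc) t * Wb pi')).
    by apply: ler_sum => k _; rewrite /h /pt; exact: (pit_bound Hpi' (ltW t0) t1).
  by rewrite sumr_const mulr_natl.
have Hd' := Hd h Hh (le_trans Hnh tW).
have Ptt := inPi_pit Hpi' (ltW t0) t1.
have ep : padd h = pt by apply: funext => k; rewrite /padd /h; ring.
rewrite ep in Hd'.
have Hvi := VI _ Ptt (pit_off pi' t).
rewrite (sum_vf_g Hgv (pit_off pi' t)) -/pt in Hvi.
have Hu := util_pit Hpi' Hoff (ltW t0) t1.
move: Hd'; rewrite ler_norml => /andP[_ hi].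
have he : e * Hn h <= e * (t * W) by apply: ler_wpM2l => //; exact: ltW.
have : t * (util P mu gamma F i pi' - util P mu gamma F i pis) <= t * (e * W).
  have : \sum_k g k * h k = \sum_k g k * (pt k - pis k) by [].
  lra.
by rewrite ler_pM2l.
Qed.

End Deriv.
Implicit Types (pis : pc -> R).
Definition bP (k : pc) : ('I_N * S)%type := (tag k, (tagged k).1).

Lemma sum_blockP (p : pc -> R) j s :
  \sum_(k | bP k == (j, s)) p k = \sum_(a : A j) p (mkc (s, a)).
Proof.
rewrite big_mkcond sumpc (bigD1 j) //= [X in _ + X]big1 ?addr0; last first.
  move=> j' hj'; apply: big1 => x _; rewrite /bP /= xpair_eqE (negbTE hj') /=; done.
rewrite sumSA (bigD1 s) //= [X in _ + X]big1 ?addr0; last first.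
  move=> s' hs'; apply: big1 => a _; rewrite /bP /= xpair_eqE eqxx (negbTE hs'); done.
by apply: eq_bigr => a _; rewrite /bP /= xpair_eqE !eqxx.
Qed.

Lemma inPi_Cb (p : pc -> R) : inPi p <-> Cb bP p.
Proof.
split.
  move=> H; split; first exact: Pi_ge0.
  by case=> j s; rewrite sum_blockP; exact: (proj2 (H j s)).
move=> [H0 H1] j s; split; first by move=> a; exact: H0.
by have := H1 (j, s); rewrite sum_blockP.
Qed.

Lemma sum_blockI (j : 'I_N) (p : (S * A j)%type -> R) s :
  \sum_(x | x.1 == s) p x = \sum_(a : A j) p (s, a).
Proof.
rewrite big_mkcond sumSA (bigD1 s) //= [X in _ + X]big1 ?addr0; last first.
  by move=> s' hs'; apply: big1 => a _; rewrite /= (negbTE hs').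
by apply: eq_bigr => a _; rewrite /= eqxx.
Qed.

Lemma inPii_Cb (j : 'I_N) (p : (S * A j)%type -> R) : inPi_i j p <-> Cb (@fst S (A j)) p.
Proof.
split.
  move=> H; split; first by case=> s a; exact: (proj1 (H s)).
  by move=> s; rewrite sum_blockI; exact: (proj2 (H s)).
move=> [H0 H1] s; split; first by move=> a; exact: H0.
by have := H1 s; rewrite sum_blockI.
Qed.

Lemma VI_iff (I : finType) (C C' : (I -> R) -> Prop) x y :
  (forall z, C z <-> C' z) -> (VI C x y <-> VI C' x y).
Proof. by move=> e; split => H z /e; exact: H. Qed.

Lemma convex_iff (I : finType) (C C' : (I -> R) -> Prop) :
  (forall z, C z <-> C' z) -> convexs C' -> convexs C.
Proof. by move=> e cC y z t /e Cy /e Cz ht; apply/e; exact: cC. Qed.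

Lemma ne_block pis : inPi pis -> forall j (s : S), exists a : A j, true.
Proof.
move=> H j s; case: (pickP (fun _ : A j => true)) => [a _|h]; first by exists a.
have := proj2 (H j s); rewrite big_pred0 // => e.
by have := @oner_neq0 R; rewrite e eqxx.
Qed.

Lemma projPi_char pis (x : pc -> R) : inPi pis -> (pis = Proj (@inPi R N S A) x <-> VI (@inPi R N S A) x pis).
Proof.
move=> Hp; apply: proj_char => //.
  exact: (convex_iff inPi_Cb (@convex_Cb R _ _ bP)).
have [y [Cy Vy]] := @Cb_exists R _ _ bP x (fun '(j, s) =>
  let: ex_intro a _ := ne_block Hp j s in ex_intro _ (mkc (s, a)) erefl).
by exists y; split; [apply/inPi_Cb | apply/(VI_iff _ _ inPi_Cb)].
Qed.

Lemma projPii_char (j : 'I_N) pis (y x : (S * A j)%type -> R) : inPi pis -> inPi_i j y ->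
  (y = Proj (@inPi_i R N S A j) x <-> VI (@inPi_i R N S A j) x y).
Proof.
move=> Hp Hy; apply: proj_char => //.
  exact: (convex_iff (@inPii_Cb j) (@convex_Cb R _ _ (@fst S (A j)))).
have [y0 [Cy Vy]] := @Cb_exists R _ _ (@fst S (A j)) x (fun s =>
  let: ex_intro a _ := ne_block Hp j s in ex_intro _ (s, a) erefl).
by exists y0; split; [apply/inPii_Cb | apply/(VI_iff _ _ (@inPii_Cb j))].
Qed.

Section Final.
Variable F : forall i : 'I_N, (pc -> R) -> (pcoord_mi S A i -> R) -> R.
Hypothesis HFdiff : forall (i : 'I_N) (l pi : pc -> R), inLam l -> inPi pi ->
     diffble (Fjoint F i) (joinv i l (pminus i pi)).
Hypothesis HA1 : forall (i : 'I_N) (pi : pc -> R), inPi pi ->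
     forall l l' : pc -> R, inLam l -> inLam l' ->
     forall t : R, 0 <= t <= 1 ->
       t * @F i l (pminus i pi) + (1 - t) * @F i l' (pminus i pi)
         <= @F i (fun k => t * l k + (1 - t) * l' k) (pminus i pi).
Hypothesis HA2 : forall pi : pc -> R, inPi pi -> forall s, 0 < dmu P mu gamma pi s.
Variable pis : pc -> R.
Hypothesis Hpis : inPi pis.

Local Notation v := (vfield P mu gamma F pis).

Lemma Nash_iff : Nash P mu gamma F pis <-> forall i, VIi i pis F.
Proof.
split.
  move=> [_ H] i; apply: (Nash_VI Hpis (HFdiff i (lam_inLam Hpis) Hpis)); exact: H.
move=> H; split => // i.
exact: (VI_Nash Hpis (HFdiff i (lam_inLam Hpis) Hpis) (HA1 i Hpis) HA2 (H i)).
Qed.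

Definition zmix (i : 'I_N) (z : pc -> R) : pc -> R := fun k => if tag k == i then z k else pis k.

Lemma inPi_zmix i z : inPi z -> inPi (zmix i z).
Proof.
move=> Hz j s; case: (eqVneq j i) => [e|ne].
  by subst j; have := Hz i s; rewrite /restr /zmix /= eqxx.
by have := Hpis j s; rewrite /restr /zmix /= (negbTE ne).
Qed.

Lemma joint_iff : (forall z, inPi z -> \sum_k v k * (z k - pis k) <= 0) <-> forall i, VIi i pis F.
Proof.
split; first by move=> H i pi' Hpi' _; exact: H.
move=> H z Hz.
have e : \sum_k v k * (z k - pis k) = \sum_i \sum_k v k * (zmix i z k - pis k).
  rewrite exchange_big /=; apply: eq_bigr => k _.
  rewrite (bigD1 (tag k)) //= big1 ?addr0; first by rewrite /zmix eqxx.
  by move=> j hj; rewrite /zmix eq_sym (negbTE hj) subrr mulr0.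
rewrite e; apply: sumr_le0 => i _; apply: (H i (zmix i z)); first exact: inPi_zmix.
by move=> k hk; rewrite /zmix (negbTE hk).
Qed.

Lemma VI_eta eta : 0 < eta ->
  (VI (@inPi R N S A) (fun k => pis k + eta * v k) pis <->
   forall z, inPi z -> \sum_k v k * (z k - pis k) <= 0).
Proof.
move=> e0.
have eq : forall z : pc -> R, \sum_k (pis k + eta * v k - pis k) * (z k - pis k) =
   eta * \sum_k v k * (z k - pis k).
  by move=> z; rewrite mulr_sumr; apply: eq_bigr => k _; ring.
split => H z Hz; have := H z Hz; rewrite eq //.
  by rewrite pmulr_rle0.
by move=> h; rewrite pmulr_rle0.
Qed.

Lemma sum_on (i : 'I_N) (f : pc -> R) : (forall k, tag k != i -> f k = 0) ->
  \sum_k f k = \sum_(x : (S * A i)%type) f (mkc x).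
Proof.
move=> hf; rewrite sumpc (bigD1 i) //= [X in _ + X]big1 ?addr0 //.
by move=> j hj; apply: big1 => x _; apply: hf.
Qed.

Definition ext (i : 'I_N) (zi : (S * A i)%type -> R) : pc -> R :=
  fun k => if [pick x : (S * A i)%type | mkc x == k] is Some x then zi x else pis k.

Lemma ext_on (i : 'I_N) (zi : (S * A i)%type -> R) (x : (S * A i)%type) : ext zi (mkc x) = zi x.
Proof.
rewrite /ext; case: pickP => [y /eqP e | H]; first by rewrite (eq_from_Tagged e).
by have := H x; rewrite eqxx.
Qed.

Lemma ext_off (i : 'I_N) (zi : (S * A i)%type -> R) (k : pc) : tag k != i -> ext zi k = pis k.
Proof.
rewrite /ext; case: pickP => [y /eqP e | //].
by rewrite -e /= eqxx.
Qed.

Lemma inPi_ext (i : 'I_N) (zi : (S * A i)%type -> R) : inPi_i i zi -> inPi (ext zi).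
Proof.
move=> Hz j s; case: (eqVneq j i) => [e|ne].
  subst j; split.
    by move=> a; rewrite /restr ext_on; exact: (proj1 (Hz s)).
  by rewrite /restr (eq_bigr (fun a => zi (s, a))) ?(proj2 (Hz s)) // => a _; rewrite ext_on.
split.
  by move=> a; rewrite /restr ext_off //; exact: (proj1 (Hpis j s)).
by rewrite /restr (eq_bigr (fun a => pis (mkc (s, a)))) ?(proj2 (Hpis j s)) // => a _; rewrite ext_off.
Qed.

Lemma agent_iff (i : 'I_N) :
  (forall zi : (S * A i)%type -> R, inPi_i i zi -> \sum_x grad_i P mu gamma F i pis x * (zi x - restr pis i x) <= 0)
  <-> VIi i pis F.
Proof.
split.
  move=> H pi' Hpi' Hoff.
  rewrite (sum_on (i := i)); last by move=> k hk; rewrite Hoff // subrr mulr0.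
  exact: (H (restr pi' i) (Hpi' i)).
move=> H zi Hzi.
have := H (ext zi) (inPi_ext Hzi) (fun k hk => ext_off zi hk).
rewrite (sum_on (i := i)); last by move=> k hk; rewrite ext_off // subrr mulr0.
by rewrite (eq_bigr (fun x => grad_i P mu gamma F i pis x * (zi x - restr pis i x))) // => x _;
  rewrite ext_on.
Qed.

Lemma VI_eta_i (i : 'I_N) (eta : R) : 0 < eta ->
  (VI (@inPi_i R N S A i) (fun x => restr pis i x + eta * grad_i P mu gamma F i pis x) (restr pis i) <->
   forall zi : (S * A i)%type -> R, inPi_i i zi -> \sum_x grad_i P mu gamma F i pis x * (zi x - restr pis i x) <= 0).
Proof.
move=> e0.
have eq : forall z : (S * A i)%type -> R,
   \sum_x (restr pis i x + eta * grad_i P mu gamma F i pis x - restr pis i x) * (z x - restr pis i x) =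
   eta * \sum_x grad_i P mu gamma F i pis x * (z x - restr pis i x).
  by move=> z; rewrite mulr_sumr; apply: eq_bigr => k _; ring.
split => H z Hz; have := H z Hz; rewrite eq //.
  by rewrite pmulr_rle0.
by move=> h; rewrite pmulr_rle0.
Qed.

Lemma main_result :
  (Nash P mu gamma F pis <->
     (forall eta : R, 0 < eta ->
        pis = Proj (@inPi R N S A) (fun k => pis k + eta * vfield P mu gamma F pis k)))
  /\
  (Nash P mu gamma F pis <->
     (forall (i : 'I_N) (eta : R), 0 < eta ->
        restr pis i = Proj (@inPi_i R N S A i)
                   (fun x => restr pis i x + eta * grad_i P mu gamma F i pis x))).
Proof.
split.
  rewrite Nash_iff -joint_iff; split.
    by move=> H eta e0; apply/(projPi_char _ Hpis)/(VI_eta e0).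
  by move=> H; apply/(VI_eta ltr01)/(projPi_char _ Hpis); exact: H.
rewrite Nash_iff; split.
  move=> H i eta e0; apply/(projPii_char _ Hpis (Hpis i))/(VI_eta_i _ e0)/agent_iff; exact: H.
move=> H i; apply/agent_iff/(VI_eta_i _ ltr01)/(projPii_char _ Hpis (Hpis i)); exact: H.
Qed.

End Final.

End MDP.

Unset Implicit Arguments.

Theorem theorem1 (R : realType) (N : nat) (S : finType) (A : 'I_N -> finType)
  (P : S -> jact A -> S -> R) (mu : S -> R) (gamma : R)
  (F : forall i : 'I_N, (pcoord S A -> R) -> (pcoord_mi S A i -> R) -> R)
  (* transition kernel *)
  (HP0 : forall s a s', 0 <= P s a s')
  (HP1 : forall s a, \sum_(s' : S) P s a s' = 1)
  (* initial distribution *)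
  (Hmu0 : forall s, 0 <= mu s) (Hmu1 : \sum_(s : S) mu s = 1)
  (* discount *)
  (Hgamma : 0 < gamma < 1)
  (* F_i differentiable on Lambda x Pi_{-i} *)
  (HFdiff : forall (i : 'I_N) (l pi : pcoord S A -> R), inLam l -> inPi pi ->
     diffble (Fjoint F i) (joinv i l (pminus i pi)))
  (* (A1) joint concavity of lambda |-> F_i(lambda, pi_{-i}) on Lambda *)
  (HA1 : forall (i : 'I_N) (pi : pcoord S A -> R), inPi pi ->
     forall l l' : pcoord S A -> R, inLam l -> inLam l' ->
     forall t : R, 0 <= t <= 1 ->
       t * F i l (pminus i pi) + (1 - t) * F i l' (pminus i pi)
         <= F i (fun k => t * l k + (1 - t) * l' k) (pminus i pi))
  (* (A2) *)
  (HA2 : forall pi : pcoord S A -> R, inPi pi -> forall s, 0 < dmu P mu gamma pi s)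
  (pistar : pcoord S A -> R) (Hpistar : inPi pistar) :
  (Nash P mu gamma F pistar <->
     (forall eta : R, 0 < eta ->
        pistar = Proj (@inPi R N S A)
                   (fun k => pistar k + eta * vfield P mu gamma F pistar k)))
  /\
  (Nash P mu gamma F pistar <->
     (forall (i : 'I_N) (eta : R), 0 < eta ->
        restr pistar i = Proj (@inPi_i R N S A i)
                   (fun x => restr pistar i x + eta * grad_i P mu gamma F i pistar x))).
Proof.
exact: (main_result HP0 HP1 Hmu0 Hmu1 Hgamma HFdiff HA1 HA2 Hpistar).
Qed.
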